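(* Let $T>0$, $\epsilon>0$, $\delta\in(0,1)$, and let $\mathcal{R}$ consist of $M=\frac{12T}{n\epsilon^2}\ln\frac{2n}{\delta}$ independently generated random RR sets. Then with probability at least $1-\delta$ the following hold for every node $u\in V$: (1) if $I_u\ge T$, then $n\,\mathcal{F_R}(u)\ge T-\frac{\epsilon n}{2}$; (2) if $I_u<T-\epsilon n$, then $n\,\mathcal{F_R}(u)<T-\frac{\epsilon n}{2}$.
   Context: $G=\langle V,E,w\rangle$ is a network with $n=|V|$ under the Linear Threshold or Independent Cascade model (given by its live-edge distribution: LT — each node $v$ independently selects at most one incoming live edge, $(u,v)$ with probability $w_{uv}/W_v$ where $W_v=w_v+\sum_{u}w_{uv}$ includes a self-weight $w_v$; IC — each edge $(u,v)$ is live independently with probability $w_{uv}$). The influence spread $I(S)$ is the expected number of nodes reachable from $S$ via live edges, and $I_u=I(\{u\})$. A random RR set is the set of nodes that can reach a uniformly random node $v\in V$ via live edges in a freshly sampled live-edge graph. $\mathcal{F_R}(u)$ is the fraction of RR sets in $\mathcal{R}$ that contain $u$. *)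

(* Defs.v *)
From HB Require Import structures.
From mathcomp Require Import all_boot all_order all_algebra.
From mathcomp Require Import reals exp.

Set Implicit Arguments.
Unset Strict Implicit.
Unset Printing Implicit Defensive.

Import Order.TTheory GRing.Theory Num.Theory.
Local Open Scope ring_scope.

(* The network G = <V,E,w> is given by a
   weight function w : V -> V -> R (w u v = w_{uv}, and w u v = 0 for
   non-edges) and, for the LT model, self-weights ws : V -> R (ws v = w_v).
   A live-edge graph is a set of (directed) edges L : {set V * V}. *)

Inductive diff_model := IC | LT.

Definition reach (n : nat) (L : {set 'I_n * 'I_n}) (u x : 'I_n) : bool :=
  connect (fun a b => (a, b) \in L) u x.

Definition Wtot (R : numDomainType) (n : nat) (w : 'I_n -> 'I_n -> R)
  (ws : 'I_n -> R) (v : 'I_n) : R := ws v + \sum_(u : 'I_n) w u v.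

Definition valid_model (R : numDomainType) (n : nat) (m : diff_model)
  (w : 'I_n -> 'I_n -> R) (ws : 'I_n -> R) : Prop :=
  match m with
  | IC => forall u v, 0 <= w u v <= 1
  | LT => [/\ forall u v, 0 <= w u v, forall v, 0 <= ws v &
             forall v, 0 < Wtot w ws v]
  end.

(* probability of the live-edge graph L under the model:
   IC : each edge (u,v) live independently with probability w_{uv};
   LT : each node v independently selects at most one incoming live edge,
        (u,v) with probability w_{uv}/W_v, none with probability w_v/W_v. *)
Definition live_prob (R : numFieldType) (n : nat) (m : diff_model)
  (w : 'I_n -> 'I_n -> R) (ws : 'I_n -> R) (L : {set 'I_n * 'I_n}) : R :=
  match m with
  | IC => \prod_(e : 'I_n * 'I_n)
            (if e \in L then w e.1 e.2 else 1 - w e.1 e.2)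
  | LT => \prod_(v : 'I_n)
            (let inL := [set u | (u, v) \in L] in
             if #|inL| == 0%N then ws v / Wtot w ws v
             else if #|inL| == 1%N then (\sum_(u in inL) w u v) / Wtot w ws v
             else 0)
  end.

Definition influence (R : numFieldType) (n : nat) (m : diff_model)
  (w : 'I_n -> 'I_n -> R) (ws : 'I_n -> R) (S : {set 'I_n}) : R :=
  \sum_(L : {set 'I_n * 'I_n})
     live_prob m w ws L * #|[set x | [exists s in S, reach L s x]]|%:R.

Definition influence1 (R : numFieldType) (n : nat) (m : diff_model)
  (w : 'I_n -> 'I_n -> R) (ws : 'I_n -> R) (u : 'I_n) : R :=
  influence m w ws [set u].

(* A random RR set is generated from a sample (L, v): a live-edge graph L
   and a uniformly random target node v, independent of each other. *)
Definition rr_set (n : nat) (L : {set 'I_n * 'I_n}) (v : 'I_n) : {set 'I_n} :=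
  [set u | reach L u v].

Definition rr_prob (R : numFieldType) (n : nat) (m : diff_model)
  (w : 'I_n -> 'I_n -> R) (ws : 'I_n -> R)
  (s : {set 'I_n * 'I_n} * 'I_n) : R :=
  live_prob m w ws s.1 / n%:R.

(* A collection of M independently generated RR sets is an outcome
   om : {ffun 'I_M -> {set 'I_n * 'I_n} * 'I_n} with product probability. *)
Definition coll_prob (R : numFieldType) (n M : nat) (m : diff_model)
  (w : 'I_n -> 'I_n -> R) (ws : 'I_n -> R)
  (om : {ffun 'I_M -> {set 'I_n * 'I_n} * 'I_n}) : R :=
  \prod_(i : 'I_M) rr_prob m w ws (om i).

Definition rr_frac {R : numFieldType} (n M : nat)
  (om : {ffun 'I_M -> {set 'I_n * 'I_n} * 'I_n}) (u : 'I_n) : R :=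
  #|[set i : 'I_M | u \in rr_set (om i).1 (om i).2]|%:R / M%:R.

Definition coll_Pr (R : numFieldType) (n M : nat) (m : diff_model)
  (w : 'I_n -> 'I_n -> R) (ws : 'I_n -> R)
  (E : pred {ffun 'I_M -> {set 'I_n * 'I_n} * 'I_n}) : R :=
  \sum_(om | E om) coll_prob m w ws om.

(* Main.v *)
Require Import Defs.
From HB Require Import structures.
From mathcomp Require Import all_boot all_order all_algebra.
From mathcomp Require Import reals exp.
From mathcomp Require Import sequences ring lra.
Import Order.TTheory GRing.Theory Num.Theory.
Local Open Scope ring_scope.
Set Implicit Arguments.
Unset Strict Implicit.
Unset Printing Implicit Defensive.
Set Warnings "-notation-overridden,-ambiguous-paths".


Section Live.
Variables (R : realType) (n : nat) (m : diff_model)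
  (w : 'I_n -> 'I_n -> R) (ws : 'I_n -> R).
Hypothesis hv : valid_model m w ws.

Lemma live_prob_ge0 L : 0 <= live_prob m w ws L.
Proof.
move: hv; rewrite /live_prob; case: m => /=.
  move=> h; apply: prodr_ge0 => e _; case: ifP => _; have /andP[h0 h1] := h e.1 e.2;
  lra.
case=> hw hs hW; apply: prodr_ge0 => v _.
case: ifP => _; first by apply: divr_ge0 => //; exact: ltW.
case: ifP => _ //; apply: divr_ge0; last exact: ltW.
by apply: sumr_ge0 => u _.
Qed.

Lemma live_prob_sum1 : \sum_L live_prob m w ws L = 1.
Proof.
move: hv; rewrite /live_prob; case: m => /=.
  move=> _; rewrite -(@bigA_distr _ _ _ _ _ _ (fun e : 'I_n * 'I_n => w e.1 e.2)
                  (fun e => 1 - w e.1 e.2)).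
  by apply: big1 => e _; rewrite /= addrC subrK.
case=> hw hs hW.
pose phi (F : {ffun 'I_n -> {set 'I_n}}) : {set 'I_n * 'I_n} :=
  [set e | e.1 \in F e.2].
pose psi (L : {set 'I_n * 'I_n}) : {ffun 'I_n -> {set 'I_n}} :=
  [ffun v => [set u | (u, v) \in L]].
have c1 : cancel phi psi.
  move=> F; apply/ffunP => v; rewrite ffunE; apply/setP => u; by rewrite !inE.
have c2 : cancel psi phi.
  move=> L; apply/setP => -[u v]; by rewrite !inE ffunE inE.
rewrite (reindex phi) /=; last by exists psi => x _.
pose g (v : 'I_n) (S : {set 'I_n}) : R :=
  if #|S| == 0%N then ws v / Wtot w ws v
  else if #|S| == 1%N then (\sum_(u in S) w u v) / Wtot w ws v else 0.
transitivity (\sum_(F : {ffun 'I_n -> {set 'I_n}}) \prod_v g v (F v)).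
  apply: eq_bigr => F _; apply: eq_bigr => v _.
  have -> : [set u | (u, v) \in phi F] = F v by apply/setP => u; rewrite !inE.
  by [].
rewrite -(bigA_distr_bigA g); apply: big1 => v _.
rewrite (bigID (fun S : {set 'I_n} => #|S| == 0%N)) /=.
rewrite (eq_bigl (fun S => S == set0)); last by move=> S; rewrite cards_eq0.
rewrite big_pred1_eq /g cards0 eqxx.
rewrite (bigID (fun S : {set 'I_n} => #|S| == 1%N)) /=.
rewrite [X in _ + (_ + X)]big1; last by move=> S /andP[/negbTE -> /negbTE ->].
rewrite (eq_bigl (fun S : {set 'I_n} => #|S| == 1%N)); last first.
  by move=> S; case: eqP => // ->.
rewrite big_cards1.
under eq_bigr => u _ do rewrite cards1 /= big_set1.
rewrite addr0 -mulr_suml -mulrDl divff //.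
exact: lt0r_neq0 (hW v).
Qed.

End Live.


Section Chern.
Variables (R : realType) (S : finType) (q : S -> R) (A : pred S) (M : nat).
Hypothesis q0 : forall s, 0 <= q s.
Hypothesis q1 : \sum_s q s = 1.

Definition pA := \sum_(s | A s) q s.
Definition Qom (om : {ffun 'I_M -> S}) := \prod_i q (om i).
Definition Xc (om : {ffun 'I_M -> S}) : nat := #|[set i | A (om i)]|.

Lemma pA_ge0 : 0 <= pA. Proof. by apply: sumr_ge0. Qed.
Lemma pA_le1 : pA <= 1.
Proof.
rewrite -q1 (bigID A) /= -/pA lerDl; exact: sumr_ge0.
Qed.

Lemma Qom_ge0 om : 0 <= Qom om. Proof. by apply: prodr_ge0. Qed.

Lemma Xc_sum om : (Xc om)%:R = \sum_i (A (om i))%:R :> R.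
Proof.
rewrite /Xc -sum1_card natr_sum big_mkcond /=; apply: eq_bigr => i _.
by rewrite inE; case: (A (om i)).
Qed.

Lemma mgf l : \sum_om Qom om * expR (l * (Xc om)%:R) =
  (1 + pA * (expR l - 1)) ^+ M.
Proof.
transitivity (\sum_(om : {ffun 'I_M -> S})
   \prod_i (q (om i) * expR (l * (A (om i))%:R))).
  apply: eq_bigr => om _; rewrite Xc_sum mulr_sumr expR_sum -big_split /=.
  by [].
rewrite -(bigA_distr_bigA (fun (i : 'I_M) s => q s * expR (l * (A s)%:R))).
rewrite prodr_const card_ord; congr (_ ^+ _).
rewrite (bigID A) /= -/pA.
under eq_bigr => s -> do rewrite mulr1.
under [X in _ + X]eq_bigr => s /negbTE -> do rewrite mulr0 expR0 mulr1.
rewrite -mulr_suml -/pA.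
have -> : \sum_(i | ~~ A i) q i = 1 - pA.
  by have := q1; rewrite (bigID A) /= -/pA; lra.
lra.
Qed.

Lemma markov_up l k : 0 <= l ->
  \sum_(om | k <= (Xc om)%:R) Qom om <=
  expR (- l * k) * \sum_om Qom om * expR (l * (Xc om)%:R).
Proof.
move=> l0; rewrite mulr_sumr big_mkcond /=; apply: ler_sum => om _.
rewrite mulrCA -expRD.
case: ifP => h; last by apply: mulr_ge0; [exact: Qom_ge0|exact: expR_ge0].
rewrite -[X in X <= _]mulr1; apply: ler_wpM2l; first exact: Qom_ge0.
apply: le_trans (expR_ge1Dx _).
have : 0 <= l * ((Xc om)%:R - k) by apply: mulr_ge0; lra.
lra.
Qed.

Lemma markov_low l k : 0 <= l ->
  \sum_(om | (Xc om)%:R < k) Qom om <=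
  expR (l * k) * \sum_om Qom om * expR (- l * (Xc om)%:R).
Proof.
move=> l0; rewrite mulr_sumr big_mkcond /=; apply: ler_sum => om _.
rewrite mulrCA -expRD.
case: ifP => h; last by apply: mulr_ge0; [exact: Qom_ge0|exact: expR_ge0].
rewrite -[X in X <= _]mulr1; apply: ler_wpM2l; first exact: Qom_ge0.
apply: le_trans (expR_ge1Dx _).
have : 0 <= l * (k - (Xc om)%:R) by apply: mulr_ge0; lra.
lra.
Qed.

Lemma mgf_le l : \sum_om Qom om * expR (l * (Xc om)%:R) <=
  expR (M%:R * (pA * (expR l - 1))).
Proof.
rewrite mgf expRM_natl; apply: lerXn2r.
- have := pA_ge0; have := pA_le1; have := expR_gt0 l; rewrite nnegrE; nra.
- by rewrite nnegrE expR_ge0.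
- exact: expR_ge1Dx.
Qed.

End Chern.


Lemma poly2 (R : realFieldType) (x : R) : 0 <= x <= 1 ->
  0 <= (1 - x/10)^+4 * (2/5*x*(1-x/2) - x^+2/12) - (1-x)*(1 - (1-x/10)^+4).
Proof. move=> /andP[h0 h1]. nra. Qed.
Lemma poly1 (R : realFieldType) (x : R) : 0 <= x <= 2 ->
  0 <= (1 + x/10)^+4 - 1 - (1 + x/10)^+4 * (2/5*x*(1-x/2) + x^+2/12).
Proof. move=> /andP[h0 h1]. nra. Qed.

Section Tails.
Variable R : realType.

Lemma expR4 (l : R) : expR l = expR (l / 4) ^+ 4.
Proof. rewrite -expRM_natl; congr expR; lra. Qed.

Lemma upper_exp (c x p : R) : 0 < c -> 0 < x <= 1 -> 0 <= p <= c * (1 - x) ->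
  p * (expR (2/5*x) - 1) - 2/5*x * (c * (1 - x/2)) <= - (c * x^+2 / 12).
Proof.
move=> c0 /andP[x0 x1] /andP[p0 p1].
set u := expR (2/5*x/4).
have hu1 : 1 <= u by rewrite /u; apply: le_trans (expR_ge1Dx _); lra.
have huy : u * (1 - x/10) <= 1.
  have := expR_ge1Dx (- (2/5*x/4)); rewrite expRN -/u => h.
  have u0 : 0 < u by exact: expR_gt0.
  have : (1 - 2 / 5 * x / 4) * u <= 1.
    have uu : u^-1 * u = 1 by rewrite mulVf // gt_eqF.
    nra.
  suff -> : 1 - x/10 = 1 - 2/5*x/4 by rewrite mulrC.
  lra.
rewrite expR4 -/u.
have P := (@poly2 _ x); have {P}P : 0 <= (1 - x/10)^+4 * (2/5*x*(1-x/2) - x^+2/12) - (1-x)*(1 - (1-x/10)^+4).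
  by apply: P; lra.
set Y := (1 - x/10)^+4 in P *.
set V := u ^+ 4.
have Y0 : 0 < Y by rewrite /Y exprn_gt0 //; lra.
have VY : V * Y <= 1.
  rewrite /V /Y -exprMn -[leRHS](expr1n _ 4); apply: lerXn2r; rewrite ?nnegrE //.
  apply: mulr_ge0; lra.
have V1 : 1 <= V by rewrite /V exprn_ege1.
have E : p * (V - 1) <= c * (1 - x) * (V - 1) by apply: ler_wpM2r; lra.
nra.
Qed.

Lemma lower_exp (c x p : R) : 0 < c -> 0 < x <= 2 -> c <= p ->
  p * (expR (- (2/5*x)) - 1) + 2/5*x * (c * (1 - x/2)) <= - (c * x^+2 / 12).
Proof.
move=> c0 /andP[x0 x1] cp.
set u := expR (2/5*x/4).
have u0 : 0 < u by exact: expR_gt0.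
have hu : 1 + x/10 <= u.
  apply: le_trans (expR_ge1Dx _); lra.
have P := (@poly1 _ x); have {P}P : 0 <= (1 + x/10)^+4 - 1 - (1 + x/10)^+4 * (2/5*x*(1-x/2) + x^+2/12).
  by apply: P; lra.
set Z := (1 + x/10)^+4 in P *.
have Z0 : 0 < Z by rewrite /Z exprn_gt0 //; lra.
rewrite expRN expR4 -/u.
set V := u ^+ 4.
have V0 : 0 < V by rewrite exprn_gt0.
have ZV : Z <= V by rewrite /Z /V; apply: lerXn2r; rewrite ?nnegrE //; lra.
have W1 : V^-1 <= 1 by rewrite invf_le1 // /V exprn_ege1 //; lra.
have W0 : 0 < V^-1 by rewrite invr_gt0.
have WV : V^-1 * V = 1 by rewrite mulVf // gt_eqF.
have E : p * (V^-1 - 1) <= c * (V^-1 - 1) by apply: ler_wnM2r; lra.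
set K := 2/5*x*(1-x/2) + x^+2/12 in P.
have K1 : 0 <= 1 - K by nra.
have WZ : V^-1 * Z <= 1 by nra.
have WK : V^-1 <= 1 - K by nra.
have : c * (V^-1 - 1 + K) <= 0 by nra.
rewrite /K; nra.
Qed.

End Tails.


Section Tails2.
Variables (R : realType) (S : finType) (q : S -> R) (A : pred S) (M : nat).
Hypothesis q0 : forall s, 0 <= q s.
Hypothesis q1 : \sum_s q s = 1.

Lemma tail_low (c x L : R) : 0 < c -> 0 < x <= 2 -> c <= pA q A ->
  L <= M%:R * (c * x^+2 / 12) ->
  \sum_(om : {ffun 'I_M -> S} | (Xc A om)%:R < M%:R * (c * (1 - x/2))) Qom q om <= expR (- L).
Proof.
move=> c0 hx hp hL.
have l0 : 0 <= 2/5*x by lra.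
apply: le_trans (markov_low A M q0 _ l0) _.
apply: le_trans (ler_wpM2l (expR_ge0 _) (mgf_le A M q0 q1 (- (2/5*x)))) _.
rewrite -expRD ler_expR.
have := lower_exp c0 hx hp.
have M0 : 0 <= M%:R :> R by [].
nra.
Qed.

Lemma tail_up (c x L : R) : 0 < c -> 0 < x <= 1 -> 0 <= pA q A <= c * (1 - x) ->
  L <= M%:R * (c * x^+2 / 12) ->
  \sum_(om : {ffun 'I_M -> S} | M%:R * (c * (1 - x/2)) <= (Xc A om)%:R) Qom q om <= expR (- L).
Proof.
move=> c0 hx hp hL.
have l0 : 0 <= 2/5*x by lra.
apply: le_trans (markov_up A M q0 _ l0) _.
apply: le_trans (ler_wpM2l (expR_ge0 _) (mgf_le A M q0 q1 (2/5*x))) _.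
rewrite -expRD ler_expR.
have := upper_exp c0 hx hp.
have M0 : 0 <= M%:R :> R by [].
nra.
Qed.

Lemma Qom_sum1 : \sum_om Qom q (M:=M) om = 1.
Proof.
have := mgf A M q1 0; rewrite expR0 subrr mulr0 addr0 expr1n => <-.
by apply: eq_bigr => om _; rewrite mul0r expR0 mulr1.
Qed.

End Tails2.

Lemma sum_sub (R : realType) (T : finType) (Q : T -> R) (P P' : pred T) :
  (forall t, 0 <= Q t) -> (forall t, P t -> P' t) ->
  \sum_(t | P t) Q t <= \sum_(t | P' t) Q t.
Proof.
move=> Q0 PP; rewrite [X in _ <= X]big_mkcond [X in X <= _]big_mkcond.
apply: ler_sum => t _; case: ifP => h; first by rewrite (PP _ h).
by case: ifP.
Qed.

Lemma union_bound (R : realType) (T I : finType) (Q : T -> R) (B : I -> pred T) :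
  (forall t, 0 <= Q t) ->
  \sum_(t | [exists i, B i t]) Q t <= \sum_i \sum_(t | B i t) Q t.
Proof.
move=> Q0.
under [X in _ <= X]eq_bigr => i _ do rewrite big_mkcond.
rewrite exchange_big /= big_mkcond; apply: ler_sum => t _.
case: ifP => [/existsP[i hi]|_]; last by apply: sumr_ge0 => i _; case: ifP.
rewrite (bigD1 i) //= hi -[leLHS]addr0 lerD2l.
by apply: sumr_ge0 => j _; case: ifP.
Qed.

Section Infl.
Variables (R : realType) (n : nat) (m : diff_model)
  (w : 'I_n -> 'I_n -> R) (ws : 'I_n -> R).

Lemma infl_eq u : (0 < n)%N ->
  influence1 m w ws u =
  n%:R * \sum_(s | u \in rr_set s.1 s.2) rr_prob m w ws s.
Proof.
move=> n0.
have N0 : n%:R != 0 :> R by rewrite pnatr_eq0 -lt0n.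
rewrite /influence1 /influence /rr_prob [in RHS]big_mkcond /=.
rewrite -(pair_bigA _ (fun L v => if u \in rr_set L v then live_prob m w ws L / n%:R else 0)) /=.
rewrite mulr_sumr; apply: eq_bigr => L _.
have -> : [set x | [exists s in [set u], reach L s x]] = [set x | reach L u x].
  apply/setP => x; rewrite !inE; apply/existsP/idP => [[s /andP[/set1P -> h]] //|h].
  by exists u; rewrite inE eqxx h.
rewrite -sum1_card natr_sum big_mkcond /= !mulr_sumr; apply: eq_bigr => v _.
rewrite /rr_set !inE; case: (reach L u v); last by rewrite !mulr0.
by rewrite mulr1 mulrC divfK.
Qed.

End Infl.


Lemma conv_lt (R : realFieldType) (N Mr X k : R) : 0 < N -> 0 < Mr ->
  N * (X / Mr) < N * k -> X < Mr * k.
Proof.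
move=> N0 M0 h; have e : X = X / Mr * Mr by rewrite divfK // gt_eqF.
move: h; set a := X / Mr in e *; move=> h; rewrite e; nra.
Qed.

Lemma conv_le (R : realFieldType) (N Mr X k : R) : 0 < N -> 0 < Mr ->
  N * k <= N * (X / Mr) -> Mr * k <= X.
Proof.
move=> N0 M0 h; have e : X = X / Mr * Mr by rewrite divfK // gt_eqF.
move: h; set a := X / Mr in e *; move=> h; rewrite e; nra.
Qed.

Unset Implicit Arguments.
Set Strict Implicit.

Theorem theorem5p3 (R : realType) (n : nat) (m : diff_model)
  (w : 'I_n -> 'I_n -> R) (ws : 'I_n -> R) (T eps delta : R) (M : nat) :
  (0 < n)%N ->
  valid_model m w ws ->
  0 < T -> 0 < eps -> 0 < delta -> delta < 1 ->
  12 * T / (n%:R * eps ^+ 2) * ln (2 * n%:R / delta) <= M%:R ->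
  1 - delta <=
  coll_Pr m w ws
    (fun om : {ffun 'I_M -> {set 'I_n * 'I_n} * 'I_n} =>
       [forall u : 'I_n,
          ((T <= influence1 m w ws u) ==>
             (T - eps * n%:R / 2 <= n%:R * rr_frac om u))
          && ((influence1 m w ws u < T - eps * n%:R) ==>
             (n%:R * rr_frac om u < T - eps * n%:R / 2))]).
Proof.
move=> n0 hv T0 e0 d0 d1 hM.
have N0 : 0 < n%:R :> R by rewrite ltr0n.
have N1 : 1 <= n%:R :> R by rewrite ler1n.
pose q := rr_prob m w ws.
have q0 : forall s, 0 <= q s.
  by move=> s; apply: divr_ge0; [exact: live_prob_ge0|exact: ltW].
have q1 : \sum_s q s = 1.
  rewrite -(pair_bigA _ (fun L v => live_prob m w ws L / n%:R)) /=.
  rewrite -[RHS](live_prob_sum1 hv); apply: eq_bigr => L _.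
  by rewrite sumr_const card_ord -[live_prob m w ws L / _ *+ n]mulr_natr divfK // gt_eqF.
pose A (u : 'I_n) := fun s : {set 'I_n * 'I_n} * 'I_n => u \in rr_set s.1 s.2.
have hI u : influence1 m w ws u = n%:R * pA q (A u) by exact: infl_eq.
have [c c0 eT] : exists2 c, 0 < c & T = c * n%:R.
  exists (T / n%:R); [exact: divr_gt0|by rewrite divfK // gt_eqF].
subst T.
have [x x0 ex] : exists2 x, 0 < x & eps = x * c.
  exists (eps / c); [exact: divr_gt0|by rewrite divfK // gt_eqF].
subst eps.
set L := ln (2 * n%:R / delta) in hM.
have L0 : 0 < L by apply: ln_gt0; rewrite ltr_pdivlMr //; lra.
have hL : L <= M%:R * (c * x^+2 / 12).
  have e : 12 * (c * n%:R) / (n%:R * (x * c) ^+ 2) = 12 / (c * x^+2).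
    by field; rewrite !gt_eqF.
  rewrite e in hM.
  have -> : L = 12 / (c * x ^+ 2) * L * (c * x^+2 / 12).
    by field; rewrite !gt_eqF.
  apply: ler_wpM2r => //; apply: divr_ge0; [|by []].
  by apply: mulr_ge0; [exact: ltW|exact: sqr_ge0].
have M0 : 0 < M%:R :> R.
  have : 0 < M%:R * (c * x^+2 / 12) by lra.
  by rewrite pmulr_lgt0 // divr_gt0 // mulr_gt0 // exprn_gt0.
have hexp : expR (- L) = delta / (2 * n%:R).
  rewrite expRN lnK ?invf_div //; rewrite posrE; apply: divr_gt0 => //; lra.
pose Gu (u : 'I_n) (om : {ffun 'I_M -> {set 'I_n * 'I_n} * 'I_n}) :=
  ((c * n%:R <= influence1 m w ws u) ==>
     (c * n%:R - x * c * n%:R / 2 <= n%:R * rr_frac om u))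
  && ((influence1 m w ws u < c * n%:R - x * c * n%:R) ==>
     (n%:R * rr_frac om u < c * n%:R - x * c * n%:R / 2)).
have hb u : \sum_(om | ~~ Gu u om) Qom q om <= expR (- L).
  have p0 := pA_ge0 (A u) q0.
  have [hcp|hcp] := lerP c (pA q (A u)).
    apply: le_trans (@sum_sub _ _ _ _
       (fun om => (Xc (A u) om)%:R < M%:R * (c * (1 - x/2))) (@Qom_ge0 _ _ _ _ q0) _) _.
      move=> om; rewrite /Gu hI negb_and !negb_imply => /orP[/andP[_ h]|/andP[h _]].
        apply: (conv_lt N0 M0).
        have -> : n%:R * (c * (1 - x / 2)) = c * n%:R - x * c * n%:R / 2 by ring.
        by rewrite ltNge.
      exfalso; move: h; rewrite ltNge => /negP; apply.
      have : 0 <= x * c * n%:R by rewrite !mulr_ge0 // ltW.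
      have : c * n%:R <= n%:R * pA q (A u) by rewrite mulrC ler_wpM2l // ltW.
      lra.
    have [x2|x2] := lerP x 2.
      by apply: (tail_low q0 q1 c0 _ hcp hL); rewrite x0 x2.
    rewrite big1 ?expR_ge0 // => om h; exfalso; move: h.
    have : 0 <= (Xc (A u) om)%:R :> R by [].
    have : M%:R * (c * (1 - x / 2)) <= 0.
      rewrite pmulr_rle0 // pmulr_rle0 //; lra.
    lra.
  have [hlo|hlo] := boolP (n%:R * pA q (A u) < c * n%:R - x * c * n%:R).
    have hp : pA q (A u) < c * (1 - x).
      rewrite -(ltr_pM2l N0); have -> : n%:R * (c * (1 - x)) = c * n%:R - x * c * n%:R by ring.
      exact: hlo.
    have x1 : x < 1.
      have : 0 < c * (1 - x) by lra.
      by rewrite pmulr_rgt0 // subr_gt0.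
    apply: le_trans (@sum_sub _ _ _ _
       (fun om => M%:R * (c * (1 - x/2)) <= (Xc (A u) om)%:R) (@Qom_ge0 _ _ _ _ q0) _) _.
      move=> om; rewrite /Gu hI negb_and !negb_imply => /orP[/andP[h _]|/andP[_ h]].
        exfalso; move: h; rewrite leNgt => /negP; apply.
        rewrite mulrC ltr_pM2r //.
      apply: (conv_le N0 M0).
      have -> : n%:R * (c * (1 - x / 2)) = c * n%:R - x * c * n%:R / 2 by ring.
      by rewrite leNgt.
    apply: (tail_up q0 q1 c0 _ _ hL); first by rewrite x0 (ltW x1).
    by rewrite p0 ltW.
  rewrite big1 ?expR_ge0 // => om; rewrite /Gu hI negb_and !negb_imply.
  case/orP => /andP[h _]; exfalso; move: h; last by rewrite (negbTE hlo).
  rewrite leNgt => /negP; apply; rewrite mulrC ltr_pM2r //.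
have tot := Qom_sum1 pred0 M q1.
rewrite (bigID (fun om => [forall u, Gu u om])) /= in tot.
have bad : \sum_(om | ~~ [forall u, Gu u om]) Qom q om <= delta / 2.
  apply: le_trans (@sum_sub _ _ _ _ (fun om => [exists u, ~~ Gu u om])
     (@Qom_ge0 _ _ _ _ q0) _) _.
    by move=> om; rewrite negb_forall.
  apply: le_trans (union_bound _ (@Qom_ge0 _ _ _ _ q0)) _.
  apply: le_trans (ler_sum _ (fun u _ => hb u)) _.
  rewrite sumr_const card_ord hexp.
  rewrite -[delta / (2 * n%:R) *+ n]mulr_natr.
  have -> : delta / (2 * n%:R) * n%:R = delta / 2 by field; rewrite gt_eqF.
  by [].
rewrite /coll_Pr.
change (1 - delta <= \sum_(om | [forall u, Gu u om]) Qom q om).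
lra.
Qed.
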